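(* Under the standing assumptions below, one of the following holds: (I') there exist maps $u_1:M\to M'$ and $v_1:N\to N'$ such that for all $m\in M$, $n\in N$: $\phi\left(\left[\begin{smallmatrix} 1 & m\\ 0 & 0\end{smallmatrix}\right]\right)=\left[\begin{smallmatrix} 1 & u_1(m)\\ v_1(0) & 0\end{smallmatrix}\right]$ and $\phi\left(\left[\begin{smallmatrix} 1 & 0\\ n & 0\end{smallmatrix}\right]\right)=\left[\begin{smallmatrix} 1 & u_1(0)\\ v_1(n) & 0\end{smallmatrix}\right]$; (I'') there exist maps $u_2:N\to M'$ and $v_2:M\to N'$ such that for all $m\in M$, $n\in N$: $\phi\left(\left[\begin{smallmatrix} 1 & m\\ 0 & 0\end{smallmatrix}\right]\right)=\left[\begin{smallmatrix} 0 & u_2(0)\\ v_2(m) & 1\end{smallmatrix}\right]$ and $\phi\left(\left[\begin{smallmatrix} 1 & 0\\ n & 0\end{smallmatrix}\right]\right)=\left[\begin{smallmatrix} 0 & u_2(n)\\ v_2(0) & 1\end{smallmatrix}\right]$.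
   Context: All rings have an identity $1\neq 0$. Standing assumptions: $R,S,R',S'$ are rings whose only idempotents are $0$ and $1$; $M$ is an $R$-$S$-bimodule, $N$ an $S$-$R$-bimodule, $M'$ an $R'$-$S'$-bimodule, $N'$ an $S'$-$R'$-bimodule; $T=\left[\begin{smallmatrix} R & M\\ N & S\end{smallmatrix}\right]$ and $T'=\left[\begin{smallmatrix} R' & M'\\ N' & S'\end{smallmatrix}\right]$ are the Morita context rings with both Morita maps zero, i.e. the sets of formal matrices with entrywise addition and product $\left[\begin{smallmatrix} r & m\\ n & s\end{smallmatrix}\right]\left[\begin{smallmatrix} r' & m'\\ n' & s'\end{smallmatrix}\right]=\left[\begin{smallmatrix} rr' & rm'+ms'\\ nr'+sn' & ss'\end{smallmatrix}\right]$; and $\phi:T\to T'$ is a ring isomorphism. *)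

(* Defs.v *)
From HB Require Import structures.
From mathcomp Require Import all_boot all_order all_algebra.
Set Implicit Arguments. Unset Strict Implicit. Unset Printing Implicit Defensive.
Import GRing.Theory.
Local Open Scope ring_scope.

Definition only_trivial_idempotents (R : nzRingType) : Prop :=
  forall e : R, e * e = e -> e = 0 \/ e = 1.

Record bimod (R S : nzRingType) (M : zmodType) := Bimod {
  lact : R -> M -> M;
  ract : M -> S -> M;
  lactDl : forall (r r' : R) (m : M), lact (r + r') m = lact r m + lact r' m;
  lactDr : forall (r : R) (m m' : M), lact r (m + m') = lact r m + lact r m';
  lactA  : forall (r r' : R) (m : M), lact (r * r') m = lact r (lact r' m);
  lact1  : forall m : M, lact 1 m = m;
  ractDl : forall (m m' : M) (s : S), ract (m + m') s = ract m s + ract m' s;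
  ractDr : forall (m : M) (s s' : S), ract m (s + s') = ract m s + ract m s';
  ractA  : forall (m : M) (s s' : S), ract m (s * s') = ract (ract m s) s';
  ract1  : forall m : M, ract m 1 = m;
  lractA : forall (r : R) (m : M) (s : S), ract (lact r m) s = lact r (ract m s)
}.

(* Formal 2x2 matrices [[r, m], [n, s]] of the Morita context ring
   T = [[R, M], [N, S]] with both Morita maps zero. *)
Record mctx (R S M N : Type) := MC { c11 : R; c12 : M; c21 : N; c22 : S }.

Section MoritaOps.
Variables (R S : nzRingType) (M N : zmodType).
Variables (bM : bimod R S M) (bN : bimod S R N).

Definition mc_add (x y : mctx R S M N) : mctx R S M N :=
  MC (c11 x + c11 y) (c12 x + c12 y) (c21 x + c21 y) (c22 x + c22 y).

Definition mc_mul (x y : mctx R S M N) : mctx R S M N :=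
  MC (c11 x * c11 y)
     (lact bM (c11 x) (c12 y) + ract bM (c12 x) (c22 y))
     (ract bN (c21 x) (c11 y) + lact bN (c22 x) (c21 y))
     (c22 x * c22 y).

Definition mc_one : mctx R S M N := MC 1 0 0 1.
End MoritaOps.

Definition mc_ring_iso (R S R' S' : nzRingType) (M N M' N' : zmodType)
  (bM : bimod R S M) (bN : bimod S R N) (bM' : bimod R' S' M') (bN' : bimod S' R' N')
  (phi : mctx R S M N -> mctx R' S' M' N') : Prop :=
  [/\ bijective phi,
      (forall x y, phi (mc_add x y) = mc_add (phi x) (phi y)),
      (forall x y, phi (mc_mul bM bN x y) = mc_mul bM' bN' (phi x) (phi y))
    & phi (mc_one R S M N) = mc_one R' S' M' N'].

(* Main.v *)
Require Import Defs.
From HB Require Import structures.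
From mathcomp Require Import all_boot all_order all_algebra.
Local Open Scope ring_scope.
Import GRing.Theory.

Lemma dbl0 {V : zmodType} {a : V} : a = a + a -> a = 0.
Proof. by move=> h; apply: (addrI a); rewrite -h addr0. Qed.

Lemma lact0r (R S : nzRingType) (M : zmodType) (b : bimod R S M) r :
  lact b r 0 = 0.
Proof. by apply: (addrI (lact b r 0)); rewrite -lactDr !addr0. Qed.
Lemma lact0l (R S : nzRingType) (M : zmodType) (b : bimod R S M) m :
  lact b 0 m = 0.
Proof. by apply: (addrI (lact b 0 m)); rewrite -lactDl !addr0. Qed.
Lemma ract0r (R S : nzRingType) (M : zmodType) (b : bimod R S M) m :
  ract b m 0 = 0.
Proof. by apply: (addrI (ract b m 0)); rewrite -ractDr !addr0. Qed.
Lemma ract0l (R S : nzRingType) (M : zmodType) (b : bimod R S M) s :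
  ract b 0 s = 0.
Proof. by apply: (addrI (ract b 0 s)); rewrite -ractDl !addr0. Qed.

Ltac simp := rewrite ?mulr0 ?mul0r ?mulr1 ?mul1r ?lact1 ?ract1 ?lact0l ?lact0r
  ?ract0l ?ract0r ?addr0 ?add0r.

Ltac substall := repeat match goal with
  | H : ?a = ?a |- _ => clear H
  | H : ?v = _ |- _ => is_var v; subst v
  | H : _ = ?v |- _ => is_var v; subst v end.

Ltac fin := let H1 := fresh "H1" in let H2 := fresh "H2" in move=> H1 H2;
  move: (congr1 (@c11 _ _ _ _) H1) (congr1 (@c12 _ _ _ _) H1) (congr1 (@c21 _ _ _ _) H1) (congr1 (@c22 _ _ _ _) H1)
        (congr1 (@c11 _ _ _ _) H2) (congr1 (@c12 _ _ _ _) H2) (congr1 (@c21 _ _ _ _) H2) (congr1 (@c22 _ _ _ _) H2);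
  clear H1 H2; rewrite /=; simp; intros; substall;
  rewrite /mc_add /=; simp; try reflexivity.

Theorem corollary4p5 (R S R' S' : nzRingType) (M N M' N' : zmodType)
  (bM : bimod R S M) (bN : bimod S R N) (bM' : bimod R' S' M') (bN' : bimod S' R' N')
  (hR : only_trivial_idempotents R) (hS : only_trivial_idempotents S)
  (hR' : only_trivial_idempotents R') (hS' : only_trivial_idempotents S')
  (phi : mctx R S M N -> mctx R' S' M' N')
  (hphi : mc_ring_iso bM bN bM' bN' phi) :
  (exists (u1 : M -> M') (v1 : N -> N'),
     forall (m : M) (n : N),
       phi (MC 1 m 0 0) = MC 1 (u1 m) (v1 0) 0 /\
       phi (MC 1 0 n 0) = MC 1 (u1 0) (v1 n) 0)
  \/
  (exists (u2 : N -> M') (v2 : M -> N'),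
     forall (m : M) (n : N),
       phi (MC 1 m 0 0) = MC 0 (u2 0) (v2 m) 1 /\
       phi (MC 1 0 n 0) = MC 0 (u2 n) (v2 0) 1).
Proof.
case: hphi => [[psi phiK psiK] hadd hmul h1].
have phiI := can_inj phiK.
have phi0 : phi (MC 0 0 0 0) = MC 0 0 0 0.
  have h := hadd (MC 0 0 0 0) (MC 0 0 0 0).
  rewrite /mc_add /= !addr0 in h.
  move: h; case: (phi (MC 0 0 0 0)) => a b c d /= [] ha hb hc hd.
  by rewrite (dbl0 ha) (dbl0 hb) (dbl0 hc) (dbl0 hd).
have e0id : mc_mul bM bN (MC 1 0 0 0) (MC 1 0 0 0) = MC 1 0 0 0.
  by rewrite /mc_mul /=; congr MC; simp.
have eXm m : mc_mul bM bN (MC 1 0 0 0) (MC 0 m 0 0) = MC 0 m 0 0.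
  by rewrite /mc_mul /=; congr MC; simp.
have Xme m : mc_mul bM bN (MC 0 m 0 0) (MC 1 0 0 0) = MC 0 0 0 0.
  by rewrite /mc_mul /=; congr MC; simp.
have eYn n : mc_mul bM bN (MC 1 0 0 0) (MC 0 0 n 0) = MC 0 0 0 0.
  by rewrite /mc_mul /=; congr MC; simp.
have Yne n : mc_mul bM bN (MC 0 0 n 0) (MC 1 0 0 0) = MC 0 0 n 0.
  by rewrite /mc_mul /=; congr MC; simp.
have addm m : MC 1 m 0 0 = mc_add (MC 1 0 0 0) (MC 0 m 0 0 : mctx R S M N).
  by rewrite /mc_add /=; congr MC; simp.
have addn n : MC 1 0 n 0 = mc_add (MC 1 0 0 0) (MC 0 0 n 0 : mctx R S M N).
  by rewrite /mc_add /=; congr MC; simp.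
have Eid := hmul (MC 1 0 0 0) (MC 1 0 0 0).
rewrite e0id in Eid.
have HX m := (hmul (MC 1 0 0 0) (MC 0 m 0 0), hmul (MC 0 m 0 0) (MC 1 0 0 0)).
have HY n := (hmul (MC 1 0 0 0) (MC 0 0 n 0), hmul (MC 0 0 n 0) (MC 1 0 0 0)).
have HA m := hadd (MC 1 0 0 0) (MC 0 m 0 0 : mctx R S M N).
have HB n := hadd (MC 1 0 0 0) (MC 0 0 n 0 : mctx R S M N).
move: Eid HX HY HA HB.
case E: (phi (MC 1 0 0 0)) => [a x y b] Eid HX HY HA HB.
rewrite /mc_mul /= in Eid; case: Eid => ha hx hy hb.
have [Ha|Ha] := hR' a (esym ha); have [Hb|Hb] := hS' b (esym hb);
  subst a b; move: hx hy; simp => hx hy.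
- exfalso; subst x y; rewrite -phi0 in E.
  by move/phiI/(congr1 (@c11 _ _ _ _))/eqP: E; rewrite /= oner_eq0.
- right; exists (fun n => c12 (phi (MC 1 0 n 0))), (fun m => c21 (phi (MC 1 m 0 0))).
  move=> m n; rewrite E /=; split.
  + rewrite addm HA; case: (HX m); rewrite eXm Xme phi0.
    case: (phi (MC 0 m 0 0)) => p q r s; rewrite /mc_mul /=; simp.
    fin.
  + rewrite addn HB; case: (HY n); rewrite eYn Yne phi0.
    case: (phi (MC 0 0 n 0)) => p q r s; rewrite /mc_mul /=; simp.
    fin.
- left; exists (fun m => c12 (phi (MC 1 m 0 0))), (fun n => c21 (phi (MC 1 0 n 0))).
  move=> m n; rewrite E /=; split.
  + rewrite addm HA; case: (HX m); rewrite eXm Xme phi0.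
    case: (phi (MC 0 m 0 0)) => p q r s; rewrite /mc_mul /=; simp.
    fin.
  + rewrite addn HB; case: (HY n); rewrite eYn Yne phi0.
    case: (phi (MC 0 0 n 0)) => p q r s; rewrite /mc_mul /=; simp.
    fin.
- exfalso; have x0 := dbl0 hx; have y0 := dbl0 hy; subst x y.
  have h1' : phi (MC 1 0 0 1) = MC 1 0 0 1 := h1; rewrite -h1' in E.
  by move/phiI/(congr1 (@c22 _ _ _ _))/eqP: E; rewrite /= eq_sym oner_eq0.
Qed.
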